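(* Let $P$ be a finite $2$-group such that $P/Z(P)$ is elementary abelian. Then $(xy)^4=x^4y^4$ for all $x,y\in P$, and in particular $\Omega_2(P)$ has exponent at most $4$. Furthermore, if $B$ is a group of automorphisms of $P$ of odd order with $[\Omega_2(P),B]=1$, then $B=1$.
   Context: $\Omega_2(P)$ denotes the subgroup of $P$ generated by the elements of order at most $4$. $[\Omega_2(P),B]=1$ means every element of $B$ fixes every element of $\Omega_2(P)$. *)

(* Defs.v *)
From mathcomp Require Import all_boot all_fingroup all_solvable.
Set Implicit Arguments.
Unset Strict Implicit.
Unset Printing Implicit Defensive.

(* Main.v *)
Require Import Defs.
From mathcomp Require Import all_boot all_fingroup all_solvable.
Set Implicit Arguments.
Unset Strict Implicit.
Unset Printing Implicit Defensive.
Local Open Scope group_scope.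

Lemma part1 (gT : finGroupType) (P : {group gT})
    (hel : 2.-abelem (P / 'Z(P))) :
  forall x y, x \in P -> y \in P -> (x * y) ^+ 4 = x ^+ 4 * y ^+ 4.
Proof.
have [abQ expQ] := abelemP (isT : prime 2) hel.
have nZP : P \subset 'N('Z(P)) := normal_norm (center_normal P).
have dZ : P^`(1) \subset 'Z(P) := der1_min nZP abQ.
have sqZ : forall y, y \in P -> y ^+ 2 \in 'Z(P).
  move=> y Py; apply: coset_idr; first by rewrite groupX ?(subsetP nZP).
  by rewrite morphX ?(subsetP nZP) // expQ // mem_quotient.
move=> x y Px Py.
have cZ : forall z w, z \in 'Z(P) -> w \in P -> commute w z.
  by move=> z w /centerP[_ cz] Pw; apply: commute_sym; apply: cz.
have Zc : [~ y, x] \in 'Z(P) by apply: (subsetP dZ); apply: mem_commg.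
rewrite (expMg_Rmul 4 (cZ _ _ Zc Py) (cZ _ _ Zc Px)).
have -> : 'C(4, 2) = (2 * 3)%N by [].
rewrite expgM -commXg; last exact: cZ.
have /commgP/eqP -> : commute (y ^+ 2) x.
  by apply: commute_sym; apply: cZ; [apply: sqZ|].
by rewrite expg1n mulg1.
Qed.

Theorem lemma2p2 (gT : finGroupType) (P : {group gT})
    (hP : 2.-group P) (hel : 2.-abelem (P / 'Z(P))) :
  [/\ (forall x y, x \in P -> y \in P -> (x * y) ^+ 4 = x ^+ 4 * y ^+ 4),
      exponent 'Ohm_2(P) %| 4
    & forall B : {group {perm gT}},
        B \subset Aut P -> odd #|B| ->
        (forall b x, b \in B -> x \in 'Ohm_2(P) -> b x = x) ->
        B :=: 1].
Proof.
have p1 := part1 hel.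
have inOhm : forall u, u \in P -> u ^+ 4 = 1 -> u \in 'Ohm_2(P).
  move=> u Pu u4; rewrite (OhmE 2 hP) mem_gen // !inE Pu /=.
  by apply/eqP; exact: u4.
split=> //.
  pose K := [set x in P | x ^+ 4 == 1].
  have gK : group_set K.
    apply/group_setP; split; first by rewrite inE group1 expg1n eqxx.
    move=> x y; rewrite !inE => /andP[Px /eqP x4] /andP[Py /eqP y4].
    by rewrite groupM // p1 // x4 y4 mulg1 eqxx.
  have sOK : 'Ohm_2(P) \subset Group gK.
    rewrite (OhmE 2 hP) gen_subG; apply/subsetP => x.
    by rewrite !inE.
  apply/exponentP => x /(subsetP sOK); rewrite inE => /andP[_ /eqP].
  done.
move=> B sBA oB cB.
have key : forall b, b \in B -> forall n x, x \in P -> #[x] <= n -> b x = x.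
  move=> b Bb n; elim: n => [|n IH] x Px.
    by rewrite leqNgt order_gt0.
  move=> ox.
  have Ab : b \in Aut P := subsetP sBA b Bb.
  have bM : {in P &, forall y z, b (y * z) = b y * b z}.
    by move=> y z Py Pz; rewrite -(autmE Ab) morphM.
  have bX : forall k y, y \in P -> b (y ^+ k) = b y ^+ k.
    by move=> k y Py; rewrite -(autmE Ab) morphX.
  have [x4 | x4] := eqVneq (x ^+ 4) 1.
    by apply: cB => //; apply: inOhm.
  have fx4 : b (x ^+ 4) = x ^+ 4.
    apply: IH; first by rewrite groupX.
    rewrite orderXgcd -ltnS; apply: leq_trans ox; apply: ltn_Pdiv.
      have x1 : x != 1 by apply: contra x4 => /eqP ->; rewrite expg1n.
      have [k ok] := p_natP (mem_p_elt hP Px).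
      have k0 : (0 < k)%N.
        by move: (x1); rewrite -order_gt1 ok; case: k {ok} => //.
      have : (2 %| gcdn #[x] 4)%N.
        by rewrite dvdn_gcd ok -(prednK k0) expnS dvdn_mulr.
      by move=> h; apply: dvdn_leq h; rewrite gcdn_gt0 orbT.
    by rewrite order_gt0.
  pose u := b x * x^-1.
  have Pbx : b x \in P := Aut_closed Ab Px.
  have Pu : u \in P by rewrite groupM ?groupV.
  have u4 : u ^+ 4 = 1.
    by rewrite p1 ?groupV // -bX // fx4 expgVn mulgV.
  have Ou : u \in 'Ohm_2(P) by apply: inOhm.
  have bn : forall k, (b ^+ k) x = u ^+ k * x.
    elim=> [|k IHk]; first by rewrite expg0 perm1 mul1g.
    rewrite expgSr permM IHk bM ?groupX // bX // (cB b u) //.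
    by rewrite expgSr -mulgA /u mulgKV.
  have : u ^+ #[b] = 1.
    by apply: (mulIg x); rewrite -bn expg_order perm1 mul1g.
  move=> ub.
  have : #[u] %| gcdn 4 #[b].
    by rewrite dvdn_gcd !order_dvdn ub u4 eqxx.
  have -> : gcdn 4 #[b] = 1%N.
    apply/eqP; rewrite -/(coprime 4 #[b]) (_ : 4 = 2 ^ 2)%N // coprimeXl //.
    by rewrite coprime2n (dvdn_odd (order_dvdG Bb) oB).
  rewrite dvdn1 order_eq1 /u => /eqP h; by rewrite -(mulgKV x (b x)) h mul1g.
apply/trivgP/subsetP => b Bb; rewrite inE; apply/eqP/permP => x.
rewrite perm1.
have [Px | nPx] := boolP (x \in P).
  by apply: (key b Bb #[x]).
by apply: out_Aut nPx; apply: (subsetP sBA).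
Qed.
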